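(* For each integer $n\geq 2$, the Kneser graph $K(n,2)$ satisfies $\operatorname{tww}(K(n,2))=\operatorname{lb}_1(K(n,2))$, and this value equals $2(n-3)$ if $n\geq 5$ and $0$ otherwise.
   Context: All graphs are finite and simple. The Kneser graph $K(n,2)$ has vertex set the 2-element subsets of $\{1,\dots,n\}$, two vertices being adjacent iff they are disjoint. A trigraph is a graph whose edges are each colored red or black; a graph is viewed as a trigraph with all edges black; the red degree of a vertex is the number of red edges incident to it. For a partition $\mathcal{P}$ of $V(G)$, the quotient trigraph $G/\mathcal{P}$ has vertex set $\mathcal{P}$; two distinct parts $U,W$ are joined by a black edge if every pair $\{u,w\}$ with $u\in U,w\in W$ is a black edge of $G$, are non-adjacent if no such pair is an edge, and are joined by a red edge otherwise. A contraction sequence of an $N$-vertex trigraph $G$ is a sequence $\mathcal{P}_N,\dots,\mathcal{P}_1$ of partitions of $V(G)$ where $\mathcal{P}_N$ is the partition into singletons and each $\mathcal{P}_i$ arises from $\mathcal{P}_{i+1}$ by merging two parts; its width is the maximum red degree over all $G/\mathcal{P}_i$, and $\operatorname{tww}(G)$ is the minimum width of a contraction sequence. For $|V(G)|\geq 2$, $\operatorname{lb}_1(G)$ is the minimum over all 2-element subsets $\{u,v\}\subseteq V(G)$ of the maximum red degree of $G/\mathcal{P}$ where $\mathcal{P}$ has $\{u,v\}$ as its only non-singleton part; $\operatorname{lb}_1(G)=0$ if $|V(G)|=1$. *)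

(* Defs.v *)
From mathcomp Require Import all_boot.
Set Implicit Arguments. Unset Strict Implicit. Unset Printing Implicit Defensive.

Section TwinWidth.
Variable T : finType.
Variable e : rel T.

Definition simple_graph := symmetric e /\ irreflexive e.

Definition red_edge (U W : {set T}) : bool :=
  [exists u in U, exists w in W, e u w] &&
  [exists u in U, exists w in W, ~~ e u w].

Definition red_degree (P : {set {set T}}) (U : {set T}) : nat :=
  #|[set W in P | (W != U) && red_edge U W]|.

Definition max_red_degree (P : {set {set T}}) : nat :=
  \max_(U in P) red_degree P U.

Definition singleton_partition : {set {set T}} := [set [set x] | x : T].

Definition merge_step (P P' : {set {set T}}) : bool :=
  [exists U in P, exists W in P,
     (U != W) && (P' == (P :\ U :\ W) :|: [set U :|: W])].

Definition contraction_sequence (s : seq {set {set T}}) : Prop :=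
  exists rest, s = singleton_partition :: rest /\
    path merge_step singleton_partition rest /\
    #|last singleton_partition rest| = 1.

Definition cs_width (s : seq {set {set T}}) : nat :=
  \max_(P <- s) max_red_degree P.

Definition tww_is (d : nat) : Prop :=
  (exists s, contraction_sequence s /\ cs_width s = d) /\
  (forall s, contraction_sequence s -> d <= cs_width s).

Definition pair_partition (u v : T) : {set {set T}} :=
  [set [set u; v]] :|: [set [set x] | x in [set: T] :\ u :\ v].

(* lb_1: min over 2-subsets {u,v} of max red degree of G/P_{uv};
   0 if |V| = 1 (the default #|T| is never attained otherwise since red
   degrees are < #|T|). *)
Definition lb1 : nat :=
  if #|T| <= 1 then 0 else
  \big[minn/#|T|]_(u : T) \big[minn/#|T|]_(v : T | u != v)
     max_red_degree (pair_partition u v).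

End TwinWidth.

(* Kneser graph K(n,2): vertices are 2-element subsets of {0,...,n-1}
   (i.e. of {1..n} shifted), adjacent iff disjoint. *)
Definition kneser_vertex (n : nat) := {A : {set 'I_n} | #|A| == 2}.

Definition kneser_rel (n : nat) : rel (kneser_vertex n) :=
  fun A B => [disjoint val A & val B].
Arguments kneser_rel n : clear implicits.

(* Main.v *)
Require Import Defs.
From mathcomp Require Import all_boot zify.
Set Implicit Arguments. Unset Strict Implicit. Unset Printing Implicit Defensive.

Section Generic.
Variable T : finType.
Variable e : rel T.

Lemma red_edge11 x y : red_edge e [set x] [set y] = false.
Proof.
apply/negbTE/negP; rewrite /red_edge.
case/andP=> /existsP[u /andP[/set1P-> /existsP[w /andP[/set1P-> H1]]]].
by case/existsP=> [u' /andP[/set1P-> /existsP[w' /andP[/set1P->]]]]; rewrite H1.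
Qed.

Section Lab.
Variable K : eqType.
Definition cls (L : T -> K) y := [set x | L x == L y].
Definition part (L : T -> K) := [set cls L y | y : T].

Lemma cls_eq L y z : (cls L y == cls L z) = (L y == L z).
Proof.
apply/eqP/eqP => [E|E].
  by move/setP: E => /(_ y); rewrite !inE eqxx => /esym/eqP.
by apply/setP=> x; rewrite !inE E.
Qed.

Lemma part_same L L' : (forall x z, (L' x == L' z) = (L x == L z)) -> part L = part L'.
Proof.
move=> H; apply: eq_imset => y; apply/setP => x; by rewrite !inE H.
Qed.

Lemma part_id L : injective L -> part L = singleton_partition T.
Proof.
move=> H; apply: eq_imset => y; apply/setP => x; by rewrite !inE (inj_eq H).
Qed.

Lemma part_const L (y0 : T) : (forall x z, L x = L z) -> #|part L| = 1.
Proof.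
move=> H; suff -> : part L = [set cls L y0] by rewrite cards1.
apply/setP=> X; rewrite !inE; apply/imsetP/eqP => [[y _ ->]|->]; last by exists y0.
by apply/eqP; rewrite cls_eq (H y y0).
Qed.

Lemma part_merge L L' y1 y2 : L y1 != L y2 ->
  (forall x z, (L' x == L' z) = (L x == L z) ||
      ((L x == L y1) || (L x == L y2)) && ((L z == L y1) || (L z == L y2))) ->
  merge_step (part L) (part L').
Proof.
move=> N12 H.
have C' y : cls L' y = if (L y == L y1) || (L y == L y2) then cls L y1 :|: cls L y2 else cls L y.
  apply/setP=> x; rewrite !inE H; case: ifP => Hy; rewrite ?inE.
    rewrite andbT; case/orP: Hy => /eqP ->;
    by case: (L x == L y1); case: (L x == L y2).
  by rewrite andbF orbF.
apply/existsP; exists (cls L y1); rewrite imset_f //=.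
apply/existsP; exists (cls L y2); rewrite imset_f //= cls_eq N12 /=.
apply/eqP/setP=> X; rewrite !inE.
apply/imsetP/idP => [[y _ ->]|].
  rewrite C'; case: ifP => Hy; first by rewrite eqxx orbT.
  rewrite imset_f // !cls_eq.
  by move: Hy; case: eqP; case: eqP.
case/orP => [/andP[N2 /andP[N1 /imsetP[y _ EX]]]|/eqP ->].
  exists y => //; rewrite C' EX; case: ifP => // Hy.
  by move: N1 N2; rewrite EX !cls_eq; case/orP: Hy => ->.
by exists y1 => //; rewrite C' eqxx.
Qed.

Lemma red_bound L y (S : seq K) :
  (forall z, L z != L y -> red_edge e (cls L y) (cls L z) -> L z \in S) ->
  red_degree e (part L) (cls L y) <= size S.
Proof.
move=> H; rewrite /red_degree.
pose f k := [set x | L x == k].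
rewrite -(size_map f S); apply: leq_trans (card_size _).
apply: subset_leq_card; apply/subsetP => W; rewrite inE => /andP[/imsetP[z _ ->] /andP[Nz R]].
have -> : cls L z = f (L z) by [].
by apply: map_f; apply: H => //; rewrite -cls_eq.
Qed.

Lemma max_bound L d : (forall y, red_degree e (part L) (cls L y) <= d) ->
  max_red_degree e (part L) <= d.
Proof. by move=> H; apply/bigmax_leqP => U /imsetP[y _ ->]. Qed.
End Lab.

Definition good (Q : {set {set T}} -> Prop) (P : {set {set T}}) :=
  exists rest, path (@merge_step T) P rest /\ #|last P rest| = 1 /\ (forall X, X \in rest -> Q X).

Lemma good_base Q (P : {set {set T}}) : #|P| = 1 -> good Q P.
Proof. by exists [::]. Qed.

Lemma good_merge Q P P' : merge_step P P' -> Q P' -> good Q P' -> good Q P.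
Proof.
move=> M HQ [r [H1 [H2 H3]]]; exists (P' :: r); split; first by rewrite /= M.
split=> // X; rewrite inE => /orP[/eqP->|]; [exact: HQ|exact: H3].
Qed.

Lemma bigmin_le (I : finType) (P : pred I) (F : I -> nat) x0 i :
  P i -> \big[minn/x0]_(j | P j) F j <= F i.
Proof.
move=> Pi; have : i \in index_enum I by rewrite mem_index_enum.
elim: (index_enum I) => // a r IH; rewrite inE big_cons => /orP[/eqP<-|ir].
  by rewrite Pi geq_minl.
by case: (P a); rewrite ?(leq_trans (geq_minr _ _)) // IH.
Qed.

Lemma card_singleton : #|singleton_partition T| = #|T|.
Proof. by rewrite card_imset //; exact: set1_inj. Qed.

Lemma merge_single P : merge_step (singleton_partition T) P ->
  exists u v, u != v /\ P = pair_partition u v.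
Proof.
case/existsP=> U /andP[/imsetP[u _ ->] /existsP[W /andP[/imsetP[v _ ->] /andP[Nuv /eqP ->]]]].
exists u, v; split; first by apply: contra Nuv => /eqP->.
apply/setP=> X; rewrite /pair_partition !inE.
apply/idP/idP.
  case/orP=> [/andP[N2 /andP[N1 /imsetP[x _ EX]]]|/eqP ->].
    apply/orP; right; apply/imsetP; exists x => //.
    by rewrite !inE; subst X; rewrite !(inj_eq set1_inj) in N1 N2; rewrite N1 N2.
  by rewrite eqxx.
case/orP=> [/eqP ->|/imsetP[x]]; first by rewrite eqxx orbT.
rewrite !inE => /andP[Nv /andP[Nu _]] ->.
by rewrite !(inj_eq set1_inj) Nu Nv imset_f.
Qed.

Lemma lb1_le s : contraction_sequence s -> lb1 e <= cs_width e s.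
Proof.
case=> rest [-> [Hp Hl]]; rewrite /lb1; case: (leqP #|T| 1) => // hT.
move: hT; case: rest Hp Hl => [_|P r /= /andP[M _] _ hT]; first by rewrite /= card_singleton => ->.
have [u [v [Nuv EP]]] := merge_single M.
apply: leq_trans (@bigmin_le _ xpredT _ _ u isT) _.
apply: leq_trans (@bigmin_le _ (fun v => u != v) _ _ v Nuv) _.
rewrite /cs_width -EP; apply: leq_bigmax_seq => //; by rewrite !inE eqxx orbT.
Qed.

End Generic.

Section Kn.
Variable n : nat.
Notation V := (kneser_vertex n).

Definition kv (A : V) := [seq val i | i <- enum (val A)].
Definition klo (A : V) := nth 0 (kv A) 0.
Definition khi (A : V) := nth 0 (kv A) 1.

Lemma kv_eq A : kv A = [:: klo A; khi A].
Proof.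
have : size (kv A) = 2 by rewrite size_map -cardE (eqP (valP A)).
rewrite /klo /khi; case: (kv A) => [|a [|b [|c s]]] //.
Qed.

Lemma kv_sorted A : sorted ltn (kv A).
Proof.
rewrite /kv -[enum _](eq_filter (mem_enum _)).
rewrite -(eq_filter (mem_map val_inj _)) -filter_map.
by rewrite (sorted_filter ltn_trans) // unlock val_ord_enum iota_ltn_sorted.
Qed.

Lemma klo_lt A : klo A < khi A.
Proof. by move: (kv_sorted A); rewrite kv_eq /= andbT. Qed.

Lemma kv_lt A x : x \in kv A -> x < n.
Proof. by case/mapP=> i _ ->; exact: ltn_ord. Qed.

Lemma khi_lt A : khi A < n.
Proof. by apply: (@kv_lt A); rewrite kv_eq !inE eqxx orbT. Qed.

Lemma kmem (A : V) (x : 'I_n) : (x \in val A) = (val x == klo A) || (val x == khi A).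
Proof. by rewrite -mem_enum -(mem_map val_inj) -/(kv A) kv_eq !inE. Qed.

Lemma my_disjointP (A B : {set 'I_n}) :
  reflect (forall x, x \in A -> x \in B -> False) [disjoint A & B].
Proof.
rewrite disjoint_subset; apply: (iffP subsetP) => H x xa.
  by move: (H x xa); rewrite inE => /negP.
by rewrite inE; apply/negP; apply: H.
Qed.

Lemma kadj (A B : V) : kneser_rel n A B =
  [&& klo A != klo B, klo A != khi B, khi A != klo B & khi A != khi B].
Proof.
have hA := klo_lt A; have hB := klo_lt B; have hA' := khi_lt A; have hB' := khi_lt B.
apply/idP/idP.
  move/my_disjointP => H.
  have P1 k (hk : k < n) : k \in [:: klo A; khi A] -> k \in [:: klo B; khi B] -> False.
    move=> h1 h2; apply: (H (Ordinal hk)); rewrite kmem /=.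
      by move: h1; rewrite !inE.
    by move: h2; rewrite !inE.
  apply/and4P; split; apply/negP => /eqP E.
  - by apply: (P1 (klo A)); rewrite ?inE ?E ?eqxx ?orbT //; lia.
  - by apply: (P1 (klo A)); rewrite ?inE ?E ?eqxx ?orbT //; lia.
  - by apply: (P1 (khi A)); rewrite ?inE ?E ?eqxx ?orbT //; lia.
  - by apply: (P1 (khi A)); rewrite ?inE ?E ?eqxx ?orbT //; lia.
case/and4P => n1 n2 n3 n4; apply/my_disjointP => x; rewrite !kmem.
by case/orP=> /eqP->; case/orP=> /eqP E; move: n1 n2 n3 n4; rewrite E eqxx.
Qed.

Lemma kinj (A B : V) : klo A = klo B -> khi A = khi B -> A = B.
Proof. by move=> e1 e2; apply: val_inj; apply/setP => x; rewrite !kmem e1 e2. Qed.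

Lemma kexists a b : a < b -> b < n -> exists A : V, klo A = a /\ khi A = b.
Proof.
move=> ab bn; have an : a < n by lia.
have c2 : #|[set Ordinal an; Ordinal bn]| == 2.
  rewrite cards2; case: (Ordinal an =P Ordinal bn) => // E; have := congr1 val E; rewrite /= => ?; lia.
pose A0 : V := exist (fun A : {set 'I_n} => #|A| == 2) [set Ordinal an; Ordinal bn] c2.
exists A0.
have hl := klo_lt A0; have hh := khi_lt A0.
have m1 : Ordinal an \in val A0 by rewrite /= !inE eqxx.
have m2 : Ordinal bn \in val A0 by rewrite /= !inE eqxx orbT.
have m3 : Ordinal (ltn_trans hl hh) \in val A0 by rewrite kmem eqxx.
have m4 : Ordinal hh \in val A0 by rewrite kmem eqxx orbT.
rewrite kmem /= in m1; rewrite kmem /= in m2.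
rewrite /= !inE -!val_eqE /= in m3 m4.
move: m1 m2 m3 m4 => /orP[]/eqP ? /orP[]/eqP ? /orP[]/eqP ? /orP[]/eqP ?; lia.
Qed.

End Kn.

Definition lab (t k a b : nat) : nat * nat :=
  if t <= a then (t, t) else if (t <= b) || ((b == t.-1) && (a < k)) then (a, t) else (a, b).

Definition g1 (t k : nat) (l : nat * nat) := if l == (k, t.-1) then (k, t) else l.
Definition g2 (t : nat) (l : nat * nat) := if l.2 == t then (minn l.1 t.-1, t.-1) else l.

Ltac pcases := repeat (case: ifP; rewrite ?xpair_eqE); move=> *;
  repeat match goal with H : pair _ _ = pair _ _ |- _ => injection H; clear H; intros end;
  (try apply/eqP); simpl in *; rewrite ?xpair_eqE; lia.

Lemma lab_g1 t k a b : lab t k.+1 a b = g1 t k (lab t k a b).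
Proof. rewrite /lab /g1; pcases. Qed.

Lemma g1_inj t k l l' : 0 < t -> g1 t k l = g1 t k l' ->
  (l == l') || (((l == (k,t)) || (l == (k,t.-1))) && ((l' == (k,t)) || (l' == (k,t.-1)))).
Proof. case: l l' => p q [p' q'] ht; rewrite /g1 !xpair_eqE; pcases. Qed.

Lemma lab_g2 t a b : 0 < t -> a < b -> lab t.-1 0 a b = g2 t (lab t t.-1 a b).
Proof. move=> h1 h2; rewrite /lab /g2; pcases. Qed.

Definition rng2 t (l : nat * nat) := (l.2 == t) && (l.1 <= t) || (l.1 < l.2) && (l.2 < t.-1).

Lemma lab_rng2 t a b : a < b -> rng2 t (lab t t.-1 a b).
Proof. move=> h; rewrite /rng2 /lab; pcases. Qed.

Lemma g2_inj t l l' : 0 < t -> rng2 t l -> rng2 t l' -> g2 t l = g2 t l' ->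
  (l == l') || (((l == (t.-1,t)) || (l == (t,t))) && ((l' == (t.-1,t)) || (l' == (t,t)))).
Proof. case: l l' => p q [p' q'] ht; rewrite /rng2 /g2 /=; pcases. Qed.

Definition rng3 t (l : nat * nat) := (l.2 == t) && (l.1 < t) || (l.1 < l.2) && (l.2 < t.-1).

Lemma lab_rng3 n t a b : t.+1 = n -> a < b -> b < n -> rng3 t (lab t t.-1 a b).
Proof. move=> h1 h2 h3; rewrite /rng3 /lab; pcases. Qed.

Lemma g3_inj t l l' : 0 < t -> rng3 t l -> rng3 t l' -> g2 t l = g2 t l' -> l = l'.
Proof. case: l l' => p q [p' q'] ht; rewrite /rng3 /g2 /=; pcases. Qed.

Lemma lab_spec t k a b p q : lab t k a b = (p, q) ->
  (t <= a /\ p = t /\ q = t) \/ (a < t /\ (t <= b \/ (b = t.-1 /\ a < k)) /\ p = a /\ q = t)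
    \/ (a < t /\ b < t /\ ~(b = t.-1 /\ a < k) /\ p = a /\ q = b).
Proof. rewrite /lab; pcases. Qed.

Definition ST t := [seq (d, t) | d <- iota 0 t].
Definition SQ t c := [seq (d, t) | d <- iota 0 c ++ iota c.+1 (t - c.+1)] ++ [:: (t, t)].
Definition SM n t k c := [seq (d, t) | d <- iota 0 c ++ iota c.+1 (t.-1 - c.+1)] ++
  [seq (a, t.-1) | a <- iota k (t.-1 - k)] ++
  (if t <= n - 2 then [:: (t.-1, t); (t, t)] else [::]).
Definition Sred n t k (l : nat * nat) :=
  if (l.2 == t) && (l.1 < k) then SM n t k l.1
  else if (l.2 == t) && (l.1 < t) then SQ t l.1 else ST t.

Lemma mem_pm (s : seq nat) (p q t : nat) : ((p, q) \in [seq (d, t) | d <- s]) = (q == t) && (p \in s).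
Proof.
apply/mapP/andP => [[d ds [-> ->]]|[/eqP -> ps]]; first by rewrite eqxx.
by exists p.
Qed.

Lemma size_Sred n t k l : 5 <= n -> t < n -> k < t -> size (Sred n t k l) <= 2 * (n - 3).
Proof.
move=> h1 h2 h3; rewrite /Sred /SM /SQ /ST.
case: ifP => [/andP[_ c1]|_]; last case: ifP => [/andP[_ c1]|_].
- rewrite !size_cat !size_map size_cat !size_iota; case: ifP => /= ?; lia.
- rewrite !size_cat !size_map size_cat !size_iota /=; lia.
- rewrite size_map size_iota; lia.
Qed.

Ltac dstr := repeat match goal with H : _ \/ _ |- _ => destruct H | H: _ /\ _ |- _ => destruct H end.

Lemma redM n s k c p q a1 b1 a2 b2 a3 b3 a4 b4 :
  s.+1 < n -> k < s.+1 ->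
  a1 < b1 -> b1 < n -> a2 < b2 -> b2 < n -> a3 < b3 -> b3 < n -> a4 < b4 -> b4 < n ->
  c < k -> a1 = c -> (s.+1 <= b1 \/ b1 = s) -> a3 = c -> (s.+1 <= b3 \/ b3 = s) ->
  ((s.+1 <= a2 /\ p = s.+1 /\ q = s.+1) \/ (a2 < s.+1 /\ (s.+1 <= b2 \/ (b2 = s /\ a2 < k)) /\ p = a2 /\ q = s.+1)
    \/ (a2 < s.+1 /\ b2 < s.+1 /\ ~(b2 = s /\ a2 < k) /\ p = a2 /\ q = b2)) ->
  ((s.+1 <= a4 /\ p = s.+1 /\ q = s.+1) \/ (a4 < s.+1 /\ (s.+1 <= b4 \/ (b4 = s /\ a4 < k)) /\ p = a4 /\ q = s.+1)
    \/ (a4 < s.+1 /\ b4 < s.+1 /\ ~(b4 = s /\ a4 < k) /\ p = a4 /\ q = b4)) ->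
  (a1 <> a2 /\ a1 <> b2 /\ b1 <> a2 /\ b1 <> b2) ->
  (a3 = a4 \/ a3 = b4 \/ b3 = a4 \/ b3 = b4) ->
  (p <> c \/ q <> s.+1) ->
  (q = s.+1 /\ p < s /\ p <> c) \/ (q = s /\ k <= p /\ p < s) \/
  (s.+1 <= n - 2 /\ ((p = s /\ q = s.+1) \/ (p = s.+1 /\ q = s.+1))).
Proof. intros; dstr; subst; lia. Qed.

Lemma redQ n s k c p q a1 b1 a2 b2 a3 b3 a4 b4 :
  s.+1 < n -> k < s.+1 ->
  a1 < b1 -> b1 < n -> a2 < b2 -> b2 < n -> a3 < b3 -> b3 < n -> a4 < b4 -> b4 < n ->
  k <= c -> c < s.+1 -> a1 = c -> s.+1 <= b1 -> a3 = c -> s.+1 <= b3 ->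
  ((s.+1 <= a2 /\ p = s.+1 /\ q = s.+1) \/ (a2 < s.+1 /\ (s.+1 <= b2 \/ (b2 = s /\ a2 < k)) /\ p = a2 /\ q = s.+1)
    \/ (a2 < s.+1 /\ b2 < s.+1 /\ ~(b2 = s /\ a2 < k) /\ p = a2 /\ q = b2)) ->
  ((s.+1 <= a4 /\ p = s.+1 /\ q = s.+1) \/ (a4 < s.+1 /\ (s.+1 <= b4 \/ (b4 = s /\ a4 < k)) /\ p = a4 /\ q = s.+1)
    \/ (a4 < s.+1 /\ b4 < s.+1 /\ ~(b4 = s /\ a4 < k) /\ p = a4 /\ q = b4)) ->
  (a1 <> a2 /\ a1 <> b2 /\ b1 <> a2 /\ b1 <> b2) ->
  (a3 = a4 \/ a3 = b4 \/ b3 = a4 \/ b3 = b4) ->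
  (p <> c \/ q <> s.+1) ->
  (q = s.+1 /\ p < s.+1 /\ p <> c) \/ (p = s.+1 /\ q = s.+1).
Proof. intros; dstr; subst; lia. Qed.

Lemma redJ n s k p q a1 b1 a2 b2 a3 b3 a4 b4 :
  s.+1 < n -> k < s.+1 ->
  a1 < b1 -> b1 < n -> a2 < b2 -> b2 < n -> a3 < b3 -> b3 < n -> a4 < b4 -> b4 < n ->
  s.+1 <= a1 -> s.+1 <= a3 ->
  ((s.+1 <= a2 /\ p = s.+1 /\ q = s.+1) \/ (a2 < s.+1 /\ (s.+1 <= b2 \/ (b2 = s /\ a2 < k)) /\ p = a2 /\ q = s.+1)
    \/ (a2 < s.+1 /\ b2 < s.+1 /\ ~(b2 = s /\ a2 < k) /\ p = a2 /\ q = b2)) ->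
  ((s.+1 <= a4 /\ p = s.+1 /\ q = s.+1) \/ (a4 < s.+1 /\ (s.+1 <= b4 \/ (b4 = s /\ a4 < k)) /\ p = a4 /\ q = s.+1)
    \/ (a4 < s.+1 /\ b4 < s.+1 /\ ~(b4 = s /\ a4 < k) /\ p = a4 /\ q = b4)) ->
  (a1 <> a2 /\ a1 <> b2 /\ b1 <> a2 /\ b1 <> b2) ->
  (a3 = a4 \/ a3 = b4 \/ b3 = a4 \/ b3 = b4) ->
  (p <> s.+1 \/ q <> s.+1) ->
  (q = s.+1 /\ p < s.+1).
Proof. intros; dstr; subst; lia. Qed.

Lemma redS n s k c r p q a1 b1 a2 b2 a3 b3 a4 b4 :
  s.+1 < n -> k < s.+1 ->
  a1 < b1 -> b1 < n -> a2 < b2 -> b2 < n -> a3 < b3 -> b3 < n -> a4 < b4 -> b4 < n ->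
  a1 = c -> b1 = r -> a3 = c -> b3 = r -> r < s.+1 ->
  ((s.+1 <= a2 /\ p = s.+1 /\ q = s.+1) \/ (a2 < s.+1 /\ (s.+1 <= b2 \/ (b2 = s /\ a2 < k)) /\ p = a2 /\ q = s.+1)
    \/ (a2 < s.+1 /\ b2 < s.+1 /\ ~(b2 = s /\ a2 < k) /\ p = a2 /\ q = b2)) ->
  ((s.+1 <= a4 /\ p = s.+1 /\ q = s.+1) \/ (a4 < s.+1 /\ (s.+1 <= b4 \/ (b4 = s /\ a4 < k)) /\ p = a4 /\ q = s.+1)
    \/ (a4 < s.+1 /\ b4 < s.+1 /\ ~(b4 = s /\ a4 < k) /\ p = a4 /\ q = b4)) ->
  (a1 <> a2 /\ a1 <> b2 /\ b1 <> a2 /\ b1 <> b2) ->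
  (a3 = a4 \/ a3 = b4 \/ b3 = a4 \/ b3 = b4) ->
  (q = s.+1 /\ p < s.+1).
Proof. intros; dstr; subst; lia. Qed.

Lemma specM s k a b c : k < s.+1 -> a < b -> lab s.+1 k a b = (c, s.+1) -> c < k -> a = c /\ (s.+1 <= b \/ b = s).
Proof. move=> h0 h; rewrite /lab; pcases. Qed.
Lemma specQ s k a b c : a < b -> lab s.+1 k a b = (c, s.+1) -> k <= c -> c < s.+1 -> a = c /\ s.+1 <= b.
Proof. move=> h; rewrite /lab; pcases. Qed.
Lemma specJ s k a b : a < b -> lab s.+1 k a b = (s.+1, s.+1) -> s.+1 <= a.
Proof. move=> h; rewrite /lab; pcases. Qed.
Lemma specS s k a b c r : a < b -> lab s.+1 k a b = (c, r) -> r != s.+1 -> a = c /\ b = r /\ r < s.+1.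
Proof. move=> h; rewrite /lab; pcases. Qed.
Lemma specC s k a b c : a < b -> lab s.+1 k a b = (c, s.+1) -> c <= s.+1.
Proof. move=> h; rewrite /lab; pcases. Qed.

Lemma memM n s k c p q : c < k -> k < s.+1 ->
  (q = s.+1 /\ p < s /\ p <> c) \/ (q = s /\ k <= p /\ p < s) \/
  (s.+1 <= n - 2 /\ ((p = s /\ q = s.+1) \/ (p = s.+1 /\ q = s.+1))) ->
  (p, q) \in SM n s.+1 k c.
Proof.
move=> h1 h2 H; rewrite /SM !mem_cat !mem_pm !mem_cat !mem_iota /=.
case: ifP => h3; rewrite ?inE ?xpair_eqE; dstr; subst; lia.
Qed.

Lemma memQ s c p q : c < s.+1 ->
  (q = s.+1 /\ p < s.+1 /\ p <> c) \/ (p = s.+1 /\ q = s.+1) -> (p, q) \in SQ s.+1 c.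
Proof.
move=> h1 H; rewrite /SQ !mem_cat !mem_pm !mem_cat !mem_iota /= ?inE ?xpair_eqE; dstr; subst; lia.
Qed.

Lemma memS s p q : q = s.+1 /\ p < s.+1 -> (p, q) \in ST s.+1.
Proof. move=> [-> h]; rewrite /ST mem_pm mem_iota eqxx /=; lia. Qed.

Section GenG.
Variable T : finType.
Variable K : eqType.

Lemma part_merge_g (L L' : T -> K) (g : K -> K) y1 y2 : L y1 != L y2 ->
  (forall x, L' x = g (L x)) -> g (L y1) = g (L y2) ->
  (forall x z, g (L x) = g (L z) -> (L x == L z) ||
     (((L x == L y1) || (L x == L y2)) && ((L z == L y1) || (L z == L y2)))) ->
  merge_step (part L) (part L').
Proof.
move=> N12 HL Hg H; apply: (part_merge N12) => x z; rewrite !HL.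
apply/eqP/idP => [/H //|/orP[/eqP -> //|/andP[hx hz]]].
by case/orP: hx => /eqP ->; case/orP: hz => /eqP ->.
Qed.

Lemma part_same_g (L L' : T -> K) (g : K -> K) :
  (forall x, L' x = g (L x)) -> (forall x z, g (L x) = g (L z) -> L x = L z) ->
  part L = part L'.
Proof.
move=> HL H; apply: part_same => x z; rewrite !HL.
by apply/eqP/eqP => [/H|->].
Qed.
End GenG.

Section Stage.
Variable n : nat.
Notation V := (kneser_vertex n).
Definition Lk t k (x : V) := lab t k (klo x) (khi x).

Lemma red_v s k (y z : V) : s.+1 < n -> k < s.+1 -> Lk s.+1 k z != Lk s.+1 k y ->
  red_edge (kneser_rel n) (cls (Lk s.+1 k) y) (cls (Lk s.+1 k) z) ->
  Lk s.+1 k z \in Sred n s.+1 k (Lk s.+1 k y).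
Proof.
move=> hs hk N /andP[/existsP[u /andP[uy /existsP[w /andP[wz Euw]]]]
   /existsP[u' /andP[u'y /existsP[w' /andP[w'z Eu'w']]]]].
rewrite !inE in uy wz u'y w'z; rewrite !kadj in Euw Eu'w'.
move: (klo_lt u) (khi_lt u) (klo_lt w) (khi_lt w) (klo_lt u') (khi_lt u') (klo_lt w') (khi_lt w').
move: N uy wz u'y w'z Euw Eu'w'; rewrite /Lk.
case: (lab s.+1 k (klo y) (khi y)) => c r; case: (lab s.+1 k (klo z) (khi z)) => p q.
move: (klo u) (khi u) (klo w) (khi w) (klo u') (khi u') (klo w') (khi w') => a1 b1 a2 b2 a3 b3 a4 b4.
move=> N /eqP E1 /eqP E2 /eqP E3 /eqP E4 A1 A2 h1 h2 h3 h4 h5 h6 h7 h8.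
have Z2 := lab_spec E2; have Z4 := lab_spec E4; simpl in Z2, Z4.
have {}A1 : a1 <> a2 /\ a1 <> b2 /\ b1 <> a2 /\ b1 <> b2.
  by case/and4P: A1 => /eqP ? /eqP ? /eqP ? /eqP ?.
have {}A2 : a3 = a4 \/ a3 = b4 \/ b3 = a4 \/ b3 = b4.
  move: A2; rewrite !negb_and !negbK => /or4P[] /eqP ?; tauto.
have {}N : p <> c \/ q <> r.
  by move: N; rewrite xpair_eqE negb_and => /orP[] /eqP ?; [left|right].
rewrite /Sred /=.
case: ifP => [/andP[/eqP Er Ck]|C1].
  subst r; have [? ?] := specM hk h1 E1 Ck; have [? ?] := specM hk h5 E3 Ck.
  apply: memM => //; by apply: (redM hs hk h1 h2 h3 h4 h5 h6 h7 h8 Ck) => //; congruence.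
case: ifP => [/andP[/eqP Er Ct]|C2].
  subst r; have Kc : k <= c by move: C1; rewrite eqxx /= => /negbT; rewrite -leqNgt.
  have [? ?] := specQ h1 E1 Kc Ct; have [? ?] := specQ h5 E3 Kc Ct.
  apply: memQ => //; by apply: (redQ hs hk h1 h2 h3 h4 h5 h6 h7 h8 Kc Ct) => //; congruence.
apply: memS.
case: (r =P s.+1) => Er.
  subst r; have Cs : c = s.+1.
    have := specC h1 E1; move: C2; case: (ltnP c s.+1) => //=; rewrite eqxx /=; lia.
  subst c; have ? := specJ h1 E1; have ? := specJ h5 E3.
  by apply: (redJ hs hk h1 h2 h3 h4 h5 h6 h7 h8) => //; congruence.
have /eqP Er' := Er.
have [? [? ?]] := specS h1 E1 Er'; have [? [? ?]] := specS h5 E3 Er'.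
by apply: (redS hs hk h1 h2 h3 h4 h5 h6 h7 h8) => //; congruence.
Qed.


Lemma lab_id a b : a < b -> b < n -> lab n.-1 0 a b = (a, b).
Proof. move=> h1 h2; rewrite /lab; pcases. Qed.

Lemma Lk_inj : injective (Lk n.-1 0).
Proof.
move=> x y; rewrite /Lk !lab_id ?klo_lt ?khi_lt //; case=> e1 e2; exact: kinj.
Qed.

Lemma Lk0 t k (x : V) : Lk t.+1 k x = lab t.+1 k (klo x) (khi x).
Proof. by []. Qed.

Lemma red_stage s k : 5 <= n -> s.+1 < n -> k < s.+1 ->
  max_red_degree (kneser_rel n) (part (Lk s.+1 k)) <= 2 * (n - 3).
Proof.
move=> h5 hs hk; apply: max_bound => y.
apply: leq_trans (size_Sred (Lk s.+1 k y) h5 hs hk).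
by apply: red_bound => z; apply: red_v.
Qed.

Lemma red_stage0 d : max_red_degree (kneser_rel n) (part (Lk 0 0)) <= d.
Proof.
apply: max_bound => y; apply: leq_trans (red_bound (S := [::]) _) _ => //.
Qed.

Variable Q : {set {set V}} -> Prop.
Hypothesis HQ : forall s k, s.+1 < n -> k < s.+1 -> Q (part (Lk s.+1 k)).
Hypothesis HQ0 : Q (part (Lk 0 0)).
Hypothesis hn : 1 < n.

Lemma vx a b : a < b -> b < n -> exists y : V, Lk a.+1 0 y = Lk a.+1 0 y /\ klo y = a /\ khi y = b.
Proof. by move=> h1 h2; have [y [e1 e2]] := kexists h1 h2; exists y. Qed.

Lemma good_all t : t < n -> forall k, k <= t.-1 -> good Q (part (Lk t k)).
Proof.
elim: t => [_ k _|s IH hs].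
  have [y0 _] := kexists (ltnSn 0) hn.
  by apply: good_base; apply: (part_const y0) => x z; rewrite /Lk /lab.
have IHs := IH (ltnW hs).
have QS0 : Q (part (Lk s 0)) by case: s {IH IHs} hs => [|s'] hs; [exact: HQ0|apply: HQ => //; exact: ltnW].
suff H j : j <= s -> good Q (part (Lk s.+1 (s - j))).
  by move=> k /= hk; have := H (s - k) (leq_subr _ _); rewrite subKn.
elim: j => [_|j IHj hj].
  rewrite subn0.
  have E x : Lk s 0 x = g2 s.+1 (Lk s.+1 s x) by rewrite /Lk (@lab_g2 s.+1) ?klo_lt.
  case: (ltnP s.+2 n) => h2.
    have [y1 [e1 e2]] := kexists (ltnSn s) hs.
    have [y2 [e3 e4]] := kexists (ltnSn s.+1) h2.
    have L1 : Lk s.+1 s y1 = (s, s.+1) by rewrite /Lk e1 e2 /lab; pcases.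
    have L2 : Lk s.+1 s y2 = (s.+1, s.+1) by rewrite /Lk e3 e4 /lab; pcases.
    apply: (good_merge _ QS0 (IHs 0 (leq0n _))).
    apply: (part_merge_g (y1 := y1) (y2 := y2)) E _ _.
    - by rewrite L1 L2 xpair_eqE eqxx /= eqn_leq ltnn andbF.
    - rewrite L1 L2 /g2 /= !eqxx minnn; congr pair; lia.
    move=> x z Hg; rewrite L1 L2; apply: g2_inj Hg => //; exact: lab_rng2 (klo_lt _).
  have EP : part (Lk s.+1 s) = part (Lk s 0).
    apply: part_same_g E _ => x z; apply: g3_inj => //; apply: (@lab_rng3 n);
      rewrite ?klo_lt ?khi_lt //; lia.
  by rewrite EP; exact: IHs 0 (leq0n _).
have hj' : j <= s by lia.
set k := s - j.+1.
have Ek : s - j = k.+1 by rewrite /k; lia.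
have hk : k < s by rewrite /k; lia.
have IH2 := IHj hj'; rewrite Ek in IH2.
have E x : Lk s.+1 k.+1 x = g1 s.+1 k (Lk s.+1 k x) by rewrite /Lk lab_g1.
have [y1 [e1 e2]] := kexists (ltn_trans hk (ltnSn s)) hs.
have [y2 [e3 e4]] := kexists hk (ltnW hs).
have L1 : Lk s.+1 k y1 = (k, s.+1) by rewrite /Lk e1 e2 /lab; pcases.
have L2 : Lk s.+1 k y2 = (k, s) by rewrite /Lk e3 e4 /lab; pcases.
apply: (good_merge _ (@HQ s k.+1 hs hk) IH2).
apply: (part_merge_g (y1 := y1) (y2 := y2)) E _ _.
- rewrite L1 L2 xpair_eqE eqxx /=; lia.
- by rewrite L1 L2 /g1 /= eqxx; case: ifP.
move=> x z Hg; rewrite L1 L2; exact: g1_inj Hg.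
Qed.

End Stage.

Section Lower.
Variable n : nat.
Notation V := (kneser_vertex n).
Variables u v : V.
Hypothesis Nuv : u != v.
Let A := val u.
Let B := val v.
Let D := (A :|: B) :\: (A :&: B).
Let C := ~: (A :|: B).
Let f (p : 'I_n * 'I_n) : V := insubd u [set p.1; p.2].
Let X := f @: setX D C.

Lemma pair_set_inj (S : {set 'I_n}) y x y' x' :
  y \in S -> x \notin S -> y' \in S -> x' \notin S ->
  [set y; x] = [set y'; x'] -> y = y' /\ x = x'.
Proof.
move=> yS xS y'S x'S E.
have h1 : y \in [set y'; x'] by rewrite -E !inE eqxx.
have h2 : x \in [set y'; x'] by rewrite -E !inE eqxx orbT.
rewrite !inE in h1 h2.
case/orP: h1 => /eqP e1; last by move: yS; rewrite e1 (negbTE x'S).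
case/orP: h2 => /eqP e2; first by move: xS; rewrite e2 y'S.
by [].
Qed.

Lemma f_val y x : y \in A :|: B -> x \in C -> val (f (y, x)) = [set y; x].
Proof.
move=> yD xC; rewrite /f insubdK //= unfold_in cards2.
by case: (y =P x) => // E; move: xC; rewrite -E inE yD.
Qed.

Lemma f_inj : {in setX D C &, injective f}.
Proof.
move=> [y x] [y' x']; rewrite !in_setX /= => /andP[yD xC] /andP[y'D x'C] E.
have yS : y \in A :|: B by move: yD; rewrite !in_setD => /andP[].
have y'S : y' \in A :|: B by move: y'D; rewrite !in_setD => /andP[].
have xS : x \notin A :|: B by move: xC; rewrite in_setC.
have x'S : x' \notin A :|: B by move: x'C; rewrite in_setC.
have := f_val yS xC; have := f_val y'S x'C; rewrite E => -> E'.
by have [-> ->] := pair_set_inj yS xS y'S x'S (esym E').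
Qed.


Lemma card_X : 5 <= n -> 2 * (n - 3) <= #|X|.
Proof.
move=> h5; rewrite /X card_in_imset; last exact: f_inj.
rewrite cardsX.
have cA : #|A| = 2 by rewrite /A (eqP (valP u)).
have cB : #|B| = 2 by rewrite /B (eqP (valP v)).
have cU := cardsU A B; rewrite cA cB in cU.
have ci : #|A :&: B| <= 1.
  have : #|A :&: B| <= 2 by rewrite -cA; apply: subset_leq_card; apply: subsetIl.
  rewrite leq_eqVlt => /orP[/eqP e|]; last by [].
  have EA : A :&: B = A by apply/eqP; rewrite eqEcard subsetIl cA e leqnn.
  have EB : A :&: B = B by apply/eqP; rewrite eqEcard subsetIr cB e leqnn.
  have E : u = v by apply: val_inj; rewrite -/A -/B -{1}EA EB.
  by move: Nuv; rewrite E eqxx.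
have cD : #|D| = #|A :|: B| - #|A :&: B|.
  have sub : A :&: B \subset A :|: B by exact: subset_trans (subsetIl A B) (subsetUl A B).
  by rewrite /D cardsD (setIidPr sub).
have cC : #|C| = n - #|A :|: B|.
  have := cardsC (A :|: B); rewrite card_ord /C; lia.
rewrite cD cC cU.
have : #|A :&: B| = 0 \/ #|A :&: B| = 1 by lia.
case=> ->; rewrite /=; lia.
Qed.

Lemma X_red w : w \in X -> [/\ w != u, w != v &
  (kneser_rel n v w && ~~ kneser_rel n u w) || (kneser_rel n u w && ~~ kneser_rel n v w)].
Proof.
case/imsetP=> [[y x]]; rewrite in_setX /= => /andP[yD xC] ->.
have yS : y \in A :|: B by move: yD; rewrite in_setD => /andP[].
have xA : x \notin A by move: xC; rewrite in_setC in_setU negb_or => /andP[].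
have xB : x \notin B by move: xC; rewrite in_setC in_setU negb_or => /andP[].
have fv := f_val yS xC.
have xf : x \in val (f (y, x)) by rewrite fv !inE eqxx orbT.
have yf : y \in val (f (y, x)) by rewrite fv !inE eqxx.
split.
- by apply/eqP => E; move: xf; rewrite E (negbTE xA).
- by apply/eqP => E; move: xf; rewrite E (negbTE xB).
rewrite /kneser_rel fv.
have dis (Z : {set 'I_n}) : y \notin Z -> x \notin Z -> [disjoint Z & [set y; x]].
  move=> h1 h2; apply/my_disjointP => z zZ; rewrite !inE => /orP[] /eqP E; subst z.
    by rewrite zZ in h1.
  by rewrite zZ in h2.
have ndis (Z : {set 'I_n}) : y \in Z -> ~~ [disjoint Z & [set y; x]].
  by move=> h; apply/negP => /my_disjointP /(_ y h); rewrite !inE eqxx; apply.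
move: yD; rewrite in_setD in_setI in_setU.
case yA: (y \in A); case yB: (y \in B) => //= _.
  by rewrite (dis B) ?yB // (ndis A) ?yA.
by rewrite (dis A) ?yA // (ndis B) ?yB // orbT.
Qed.

Lemma lower_bound : 5 <= n ->
  2 * (n - 3) <= max_red_degree (kneser_rel n) (pair_partition u v).
Proof.
move=> h5; apply: leq_trans (card_X h5) _.
pose U := [set u; v].
have UP : U \in pair_partition u v by rewrite /pair_partition !inE eqxx.
apply: leq_trans (leq_bigmax_cond _ UP); rewrite /red_degree.
rewrite -(card_imset X (@set1_inj _)).
apply: subset_leq_card; apply/subsetP => W /imsetP[w wX ->].
have [Nu Nv R] := X_red wX.
rewrite inE; apply/and3P; split.
- rewrite /pair_partition inE; apply/orP; right; apply: imset_f.
  by rewrite !inE Nu Nv.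
- apply/eqP => /setP /(_ u); rewrite !inE eqxx /= => E.
  by move: Nu; rewrite eq_sym E.
rewrite /red_edge; case/orP: R => /andP[R1 R2].
  apply/andP; split; apply/existsP; [exists v|exists u]; rewrite !inE eqxx ?orbT /=;
    apply/existsP; exists w; rewrite !inE eqxx //.
apply/andP; split; apply/existsP; [exists u|exists v]; rewrite !inE eqxx ?orbT /=;
  apply/existsP; exists w; rewrite !inE eqxx //.
Qed.

End Lower.

Section Four.
Notation V := (kneser_vertex 4).

Definition m4 (p q : nat) := if p == 0 then q else 6 - p - q.
Definition mv (x : V) := m4 (klo x) (khi x).
Definition La j (x : V) := if mv x <= j then (mv x, 0) else (klo x, khi x).
Definition Lb i (x : V) := (maxn (mv x) i, 0).
Definition cmp (j : nat) := if j == 1 then (2, 3) else if j == 2 then (1, 3) else (1, 2).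
Definition gA j (l : nat * nat) := if (l.2 != 0) && (m4 l.1 l.2 == j.+1) then (j.+1, 0) else l.
Definition gB i (l : nat * nat) := (maxn l.1 i, 0).

Lemma bnd (x : V) : klo x < khi x /\ khi x < 4.
Proof. by split; [exact: klo_lt|exact: khi_lt]. Qed.

Lemma mv_rng x : 1 <= mv x <= 3.
Proof. have [h1 h2] := bnd x; rewrite /mv /m4; case: ifP => /=; lia. Qed.

Lemma adj_m (u w : V) : kneser_rel 4 u w -> mv u = mv w.
Proof.
have [h1 h2] := bnd u; have [h3 h4] := bnd w.
rewrite kadj /mv /m4 => /and4P[/eqP ? /eqP ? /eqP ? /eqP ?].
case: ifP; case: ifP; move=> *; lia.
Qed.

Lemma La0_inj : injective (La 0).
Proof.
move=> x y; rewrite /La.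
have -> : (mv x <= 0) = false by have := mv_rng x; lia.
have -> : (mv y <= 0) = false by have := mv_rng y; lia.
by case=> e1 e2; apply: kinj.
Qed.

Lemma La_key j (x x' : V) : La j x = La j x' -> j < mv x -> x = x'.
Proof.
rewrite /La => E h; move: E; rewrite leqNgt h /=.
have [h1 _] := bnd x; case: ifP => _ [] e1 e2; first by lia.
exact: kinj.
Qed.

Lemma noredA j (y z : V) : La j z != La j y ->
  red_edge (kneser_rel 4) (cls (La j) y) (cls (La j) z) -> False.
Proof.
move=> N /andP[/existsP[u /andP[uy /existsP[w /andP[wz Euw]]]]
   /existsP[u' /andP[u'y /existsP[w' /andP[w'z Eu'w']]]]].
rewrite !inE in uy wz u'y w'z.
have Em := adj_m Euw.
case: (leqP (mv u) j) => hj.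
  have : La j u = La j w by rewrite /La Em; rewrite Em in hj; rewrite hj.
  by move=> E; move: N; rewrite -(eqP wz) -(eqP uy) E eqxx.
have e1 : u = u' by apply: (La_key (x' := u') _ hj); rewrite (eqP uy) (eqP u'y).
have e2 : w = w'.
  by apply: (La_key (x' := w') _ (_ : j < mv w)); [rewrite (eqP wz) (eqP w'z)|rewrite -Em].
by move: Eu'w'; rewrite -e1 -e2 Euw.
Qed.

Lemma noredB i (y z : V) : Lb i z != Lb i y ->
  red_edge (kneser_rel 4) (cls (Lb i) y) (cls (Lb i) z) -> False.
Proof.
move=> N /andP[/existsP[u /andP[uy /existsP[w /andP[wz Euw]]]] _].
rewrite !inE in uy wz.
have : Lb i u = Lb i w by rewrite /Lb (adj_m Euw).
by move=> E; move: N; rewrite -(eqP wz) -(eqP uy) E eqxx.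
Qed.

Definition Q4 := fun P : {set {set V}} => max_red_degree (kneser_rel 4) P <= 0.

Lemma QA j : Q4 (part (La j)).
Proof.
apply: max_bound => y; apply: leq_trans (red_bound (S := [::]) _) _ => // z N R.
by case: (noredA N R).
Qed.

Lemma QB i : Q4 (part (Lb i)).
Proof.
apply: max_bound => y; apply: leq_trans (red_bound (S := [::]) _) _ => // z N R.
by case: (noredB N R).
Qed.


Definition LA j a b := if m4 a b <= j then (m4 a b, 0) else (a, b).
Lemma La_LA j x : La j x = LA j (klo x) (khi x). Proof. by []. Qed.

Lemma LA_g j a b : a < b -> b < 4 -> LA j.+1 a b = gA j (LA j a b).
Proof. move=> h1 h2; rewrite /LA /gA /m4; pcases. Qed.

Definition rngA j (l : nat * nat) := (l.2 == 0) && (1 <= l.1 <= j) || (l.1 < l.2 < 4) && (j < m4 l.1 l.2).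
Lemma LA_rng j a b : a < b -> b < 4 -> rngA j (LA j a b).
Proof. move=> h1 h2; rewrite /rngA /LA /m4; pcases. Qed.

Lemma gA_inj j l l' : rngA j l -> rngA j l' -> gA j l = gA j l' ->
  (l == l') || (((l == (0, j.+1)) || (l == cmp j.+1)) && ((l' == (0, j.+1)) || (l' == cmp j.+1))).
Proof. case: l l' => p q [p' q']; rewrite /rngA /gA /cmp /m4 /=; pcases. Qed.

Lemma LA_y1 j : j < 3 -> LA j 0 j.+1 = (0, j.+1).
Proof. move=> h; rewrite /LA /m4; pcases. Qed.
Lemma LA_y2 j : j < 3 -> LA j (cmp j.+1).1 (cmp j.+1).2 = cmp j.+1.
Proof. move=> h; rewrite /LA /cmp /m4; pcases. Qed.
Lemma gA_y j : j < 3 -> gA j (0, j.+1) = gA j (cmp j.+1).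
Proof. move=> h; rewrite /gA /cmp /m4; pcases. Qed.
Lemma cmp_b j : j < 3 -> (cmp j.+1).1 < (cmp j.+1).2 /\ (cmp j.+1).2 < 4.
Proof. move=> h; rewrite /cmp; pcases. Qed.
Lemma cmp_ne j : j < 3 -> (0, j.+1) != cmp j.+1.
Proof. move=> h; rewrite /cmp; pcases. Qed.

End Four.

Section Four2.
Notation V := (kneser_vertex 4).
Notation Q := Q4.
Lemma goodA j : j <= 3 -> good Q (part (La j)) -> forall i, i <= j -> good Q (part (La (j - i))).
Proof.
move=> hj G; elim=> [_|i IH hi]; first by rewrite subn0.
have hi' : i <= j by lia.
have Ej : j - i = (j - i.+1).+1 by lia.
have G' := IH hi'; rewrite Ej in G'.
set k := j - i.+1 in G' *.
have hk : k < 3 by rewrite /k; lia.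
apply: (good_merge _ (QA k.+1) G').
have [y1 [e1 e2]] := kexists (ltn0Sn k) (hk : k.+1 < 4).
have [hc1 hc2] := cmp_b hk.
have [y2 [e3 e4]] := kexists hc1 hc2.
apply: (part_merge_g (y1 := y1) (y2 := y2) (g := gA k)).
- by rewrite !La_LA e1 e2 e3 e4 LA_y1 // LA_y2 // cmp_ne.
- by move=> x; rewrite !La_LA LA_g ?klo_lt ?khi_lt.
- by rewrite !La_LA e1 e2 e3 e4 LA_y1 // LA_y2 // gA_y.
move=> x z; rewrite !La_LA e1 e2 e3 e4 LA_y1 // LA_y2 // => H.
by apply: gA_inj H; apply: LA_rng; rewrite ?klo_lt ?khi_lt.
Qed.

Lemma good4 : good Q (part (La 0)).
Proof.
have [v0 [f1 f2]] := kexists (ltn0Sn 0) (isT : 1 < 4).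
have [v1 [f3 f4]] := kexists (isT : 0 < 2) (isT : 2 < 4).
have [v2 [f5 f6]] := kexists (isT : 0 < 3) (isT : 3 < 4).
have m0 : mv v0 = 1 by rewrite /mv f1 f2.
have m1 : mv v1 = 2 by rewrite /mv f3 f4.
have m2 : mv v2 = 3 by rewrite /mv f5 f6.
have GB3 : good Q (part (Lb 3)).
  apply: good_base; apply: (part_const v0) => x z; rewrite /Lb.
  by have := mv_rng x; have := mv_rng z; move=> *; congr pair; lia.
have GB2 : good Q (part (Lb 2)).
  apply: (good_merge _ (QB 3) GB3).
  apply: (part_merge_g (y1 := v1) (y2 := v2) (g := gB 3)).
  - by rewrite /Lb m1 m2.
  - by move=> x; rewrite /Lb /gB /=; congr pair; lia.
  - by rewrite /Lb /gB m1 m2.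
  move=> x z; rewrite /Lb /gB /= m1 m2; have := mv_rng x; have := mv_rng z.
  move=> *; rewrite !xpair_eqE; pcases.
have GA3 : good Q (part (La 3)).
  apply: (good_merge _ (QB 2) GB2).
  apply: (part_merge_g (y1 := v0) (y2 := v1) (g := gB 2)).
  - by rewrite /La m0 m1.
  - by move=> x; rewrite /Lb /gB /La; have := mv_rng x; case/andP=> _ ->.
  - by rewrite /La /gB m0 m1.
  move=> x z; have hx := mv_rng x; have hz := mv_rng z; rewrite /La /gB /= m0 m1.
  have -> : (mv x <= 3) = true by lia.
  have -> : (mv z <= 3) = true by lia.
  move=> /= [] H; rewrite !xpair_eqE /=; lia.
by have := goodA (leqnn 3) GA3 (leqnn 3); rewrite subnn.
Qed.

End Four2.

Lemma seq_of_good (T : finType) (K : eqType) (Q : {set {set T}} -> Prop) (L : T -> K) :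
  part L = singleton_partition T -> Q (part L) -> good Q (part L) ->
  exists s, contraction_sequence s /\ (forall P, P \in s -> Q P).
Proof.
move=> E HQ [rest [H1 [H2 H3]]]; rewrite E in H1 H2 HQ.
exists (singleton_partition T :: rest); split; first by exists rest.
by move=> P; rewrite inE => /orP[/eqP ->|/H3].
Qed.

Lemma width_le (T : finType) (e : rel T) d s :
  (forall P, P \in s -> max_red_degree e P <= d) -> cs_width e s <= d.
Proof. by move=> H; apply/bigmax_leqP_seq => P Ps _; apply: H. Qed.

Lemma noedge_red (T : finType) (e : rel T) P : (forall x y, e x y = false) ->
  max_red_degree e P <= 0.
Proof.
move=> H; apply/bigmax_leqP => U _; rewrite leqn0 cards_eq0; apply/eqP/setP => W.
rewrite !inE /red_edge.
have -> : [exists u0 in U, exists w in W, e u0 w] = false.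
  by apply/negbTE/negP => /existsP[x /andP[_ /existsP[y /andP[_]]]]; rewrite H.
by rewrite !andbF.
Qed.

Unset Implicit Arguments.
Theorem mainTheorem7 (n : nat) (hn : 2 <= n) :
  tww_is (kneser_rel n) (lb1 (kneser_rel n)) /\
  lb1 (kneser_rel n) = (if 5 <= n then 2 * (n - 3) else 0).
Proof.
set d := if 5 <= n then 2 * (n - 3) else 0.
have [s [Cs Ws]] : exists s, contraction_sequence s /\ cs_width (kneser_rel n) s <= d.
  have Eid : part (@Lk n n.-1 0) = singleton_partition (kneser_vertex n).
    exact: part_id (Lk_inj (n := n)).
  have hn1 : n.-1 < n by lia.
  case: (leqP 5 n) => h5.
    pose Q : {set {set kneser_vertex n}} -> Prop := fun P => max_red_degree (kneser_rel n) P <= d.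
    have HQ : forall s k, s.+1 < n -> k < s.+1 -> Q (part (@Lk n s.+1 k)).
      by move=> s k h1 h2; rewrite /Q /d h5; apply: red_stage.
    have HQ0 : Q (part (@Lk n 0 0)) by apply: red_stage0.
    have G := good_all HQ HQ0 hn hn1 (leq0n _).
    have Qs : Q (part (@Lk n n.-1 0)).
      by have := HQ n.-2 0; rewrite (_ : n.-2.+1 = n.-1); [apply; lia|lia].
    have [s [Cs HP]] := seq_of_good Eid Qs G.
    by exists s; split => //; apply: width_le.
  case: (ltnP n 4) => h4.
    have NE : forall x y : kneser_vertex n, kneser_rel n x y = false.
      move=> x y; rewrite kadj.
      have := klo_lt x; have := khi_lt x; have := klo_lt y; have := khi_lt y.
      case: (klo x =P klo y) => //; case: (klo x =P khi y) => //;
      case: (khi x =P klo y) => //; case: (khi x =P khi y) => //=; lia.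
    pose Q : {set {set kneser_vertex n}} -> Prop := fun P => max_red_degree (kneser_rel n) P <= d.
    have HQa : forall P, Q P by move=> P; apply: leq_trans (noedge_red P NE) _.
    have G := good_all (Q := Q) (fun _ _ _ _ => HQa _) (HQa _) hn hn1 (leq0n _).
    have [s [Cs HP]] := seq_of_good Eid (HQa _) G.
    by exists s; split => //; apply: width_le.
  have n4 : n = 4 by lia.
  rewrite /d; move: (h5); rewrite ltnNge => /negbTE ->.
  subst n.
  have [s [Cs HP]] := seq_of_good (part_id La0_inj) (QA 0) good4.
  by exists s; split => //; apply: width_le.
have LB : d <= lb1 (kneser_rel n).
  rewrite /d; case: (leqP 5 n) => h5 //.
  have [u [u1 u2]] := kexists (isT : 0 < 1) hn.
  have [v [v1 v2]] := kexists (isT : 0 < 2) (leq_trans (isT : 3 <= 5) h5).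
  have Nuv : u != v by apply/eqP => E; move: u2; rewrite E v2.
  have cT := leq_trans (card_X Nuv h5) (max_card _).
  rewrite /lb1 ifF; last by apply/negbTE; rewrite -ltnNge; lia.
  apply: (big_ind (fun x => 2 * (n - 3) <= x)) => // [x y hx hy|x _]; first by rewrite leq_min hx hy.
  apply: (big_ind (fun x => 2 * (n - 3) <= x)) => // [y z hy hz|y Nxy]; first by rewrite leq_min hy hz.
  exact: lower_bound Nxy h5.
have E : lb1 (kneser_rel n) = d.
  by apply/eqP; rewrite eqn_leq LB (leq_trans (lb1_le _ Cs) Ws).
split=> //; split.
  exists s; split => //; apply/eqP; rewrite eqn_leq E Ws /=.
  by rewrite -E; apply: lb1_le.
by move=> s' Cs'; apply: lb1_le.
Qed.
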